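(* Let $A$ be a Banach algebra with a left approximate identity and suppose there exists $\phi\in\Delta(A)$. Then the triangular Banach algebra $T=\begin{pmatrix}A&A\\0&A\end{pmatrix}$ is not approximately biprojective.
   Context: $\Delta(A)$ is the set of nonzero multiplicative linear functionals on $A$. $T$ consists of matrices $\begin{pmatrix}a&x\\0&b\end{pmatrix}$ with $a,x,b\in A$, with matrix operations and norm $\|a\|+\|x\|+\|b\|$. A Banach algebra $B$ is approximately biprojective if there is a net $(\rho_\alpha)$ of continuous $B$-bimodule morphisms $B\to B\otimes_pB$ with $\pi_B\circ\rho_\alpha(b)\to b$ for all $b\in B$, where $\pi_B(b\otimes c)=bc$. *)

(* Defs.v *)
From HB Require Import structures.
From mathcomp Require Import all_boot all_order all_algebra.
From mathcomp Require Import all_classical all_reals all_analysis.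
From mathcomp Require Import complex.
Set Implicit Arguments. Unset Strict Implicit. Unset Printing Implicit Defensive.
Import Order.TTheory GRing.Theory Num.Theory.
Local Open Scope ring_scope.

Section Defs.
Variable K : numFieldType.

Definition seq_conv (V : zmodType) (nrm : V -> K) (s : nat -> V) (l : V) : Prop :=
  forall e : K, 0 < e -> exists N : nat, forall n : nat, (N <= n)%N -> nrm (s n - l) < e.

Definition directed (I : Type) (le : I -> I -> Prop) : Prop :=
  [/\ inhabited I, (forall i, le i i), (forall i j k, le i j -> le j k -> le i k)
    & (forall i j, exists k, le i k /\ le j k)].

Variable V : lmodType K.
Variables (nrm : V -> K) (mul : V -> V -> V).

(** (nrm, mul) make V a normed (Banach) algebra's multiplication: bilinear,
    associative, submultiplicative. Completeness is imposed separately. *)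
Definition normed_alg_mul : Prop :=
  [/\ (forall (k : K) a b c, mul (k *: a + b) c = k *: mul a c + mul b c),
      (forall (k : K) a b c, mul a (k *: b + c) = k *: mul a b + mul a c),
      (forall a b c, mul a (mul b c) = mul (mul a b) c)
    & (forall a b, nrm (mul a b) <= nrm a * nrm b)].

(** Bounded bilinear forms V x V -> K: these are exactly the continuous
    linear functionals on the projective tensor product V (x)_p V. *)
Definition bounded_bilinear (f : V -> V -> K) : Prop :=
  [/\ (forall (k : K) a b c, f (k *: a + b) c = k * f a c + f b c),
      (forall (k : K) a b c, f a (k *: b + c) = k * f a b + f a c)
    & exists M : K, forall a b, `|f a b| <= M * nrm a * nrm b].

(** An element of V (x)_p V is represented by a sequence w of pairs with
    sum_n nrm (w n).1 * nrm (w n).2 < oo, standing for sum_n (w n).1 (x) (w n).2. *)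
Definition tsummable (w : nat -> V * V) : Prop :=
  exists S : K, forall N : nat, \sum_(n < N) nrm (w n).1 * nrm (w n).2 <= S.

(** A series with terms depending on a bounded bilinear form f sums to 0 for
    every f; used to express identities in V (x)_p V (two representations
    define the same element iff all continuous functionals agree). *)
Definition tens_zero (t : (V -> V -> K) -> nat -> K) : Prop :=
  forall f, bounded_bilinear f ->
    seq_conv (fun x : K => `|x|) (fun N => \sum_(n < N) t f n) 0.

Definition tequiv (w w' : nat -> V * V) : Prop :=
  tens_zero (fun f n => f (w n).1 (w n).2 - f (w' n).1 (w' n).2).

Definition tpi_to (w : nat -> V * V) (p : V) : Prop :=
  seq_conv nrm (fun N => \sum_(n < N) mul (w n).1 (w n).2) p.

(** rho : V -> V (x)_p V (given by choosing a representative for each rho b)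
    is a continuous (= bounded) V-bimodule morphism. *)
Definition cont_bimod_morph (rho : V -> nat -> V * V) : Prop :=
  [/\ (forall b, tsummable (rho b)),
      (forall (k : K) a b, tens_zero (fun f n =>
          f (rho (k *: a + b) n).1 (rho (k *: a + b) n).2
          - k * f (rho a n).1 (rho a n).2 - f (rho b n).1 (rho b n).2)),
      (* left module morphism: rho (a b) = a . rho b *)
      (forall a b, tens_zero (fun f n =>
          f (rho (mul a b) n).1 (rho (mul a b) n).2
          - f (mul a (rho b n).1) (rho b n).2)),
      (* right module morphism: rho (a b) = rho a . b *)
      (forall a b, tens_zero (fun f n =>
          f (rho (mul a b) n).1 (rho (mul a b) n).2
          - f (rho a n).1 (mul (rho a n).2 b)))
    & (* boundedness w.r.t. the projective norm (infimum over representations) *)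
      exists C : K, forall b (e : K), 0 < e ->
        exists w, tequiv (rho b) w /\
          forall N : nat, \sum_(n < N) nrm (w n).1 * nrm (w n).2 <= C * nrm b + e].

Definition approx_biprojective : Prop :=
  exists (I : Type) (le : I -> I -> Prop) (rho : I -> V -> nat -> V * V),
    [/\ directed le,
        (forall i, cont_bimod_morph (rho i))
      & forall b (e : K), 0 < e -> exists i0, forall i, le i0 i ->
          exists p, tpi_to (rho i b) p /\ nrm (p - b) < e].

Definition left_approx_identity : Prop :=
  exists (I : Type) (le : I -> I -> Prop) (u : I -> V),
    directed le /\
    forall a (e : K), 0 < e -> exists i0, forall i, le i0 i -> nrm (mul (u i) a - a) < e.

Definition character (phi : V -> K) : Prop :=
  [/\ (forall (k : K) a b, phi (k *: a + b) = k * phi a + phi b),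
      (forall a b, phi (mul a b) = phi a * phi b)
    & exists a, phi a != 0].

End Defs.

(** The triangular Banach algebra T = [[A, A], [0, A]], with elements
    ((a, x), b) standing for the matrix [[a, x], [0, b]]. *)
Section Triangular.
Variables (K : numFieldType) (A : normedModType K) (mul : A -> A -> A).

Definition tri_norm (t : (A * A) * A) : K := `|t.1.1| + `|t.1.2| + `|t.2|.

Definition tri_mul (s t : (A * A) * A) : (A * A) * A :=
  ((mul s.1.1 t.1.1, mul s.1.1 t.1.2 + mul s.1.2 t.2), mul s.2 t.2).
End Triangular.

(* Main.v *)
Require Import Defs.
From HB Require Import structures.
From mathcomp Require Import all_boot all_order all_algebra.
From mathcomp Require Import all_classical all_reals all_analysis.
From mathcomp Require Import complex.
Import Order.TTheory GRing.Theory Num.Theory.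
Local Open Scope ring_scope.
Local Open Scope classical_set_scope.
Set Implicit Arguments. Unset Strict Implicit.

Lemma mul_addr (K : numFieldType) (V : lmodType K) (mul : V -> V -> V) :
  (forall (k : K) a b c, mul a (k *: b + c) = k *: mul a b + mul a c) ->
  forall a b c, mul a (b + c) = mul a b + mul a c.
Proof. by move=> H a b c; rewrite -{1}[b]scale1r H scale1r. Qed.

Lemma mul_addl (K : numFieldType) (V : lmodType K) (mul : V -> V -> V) :
  (forall (k : K) a b c, mul (k *: a + b) c = k *: mul a c + mul b c) ->
  forall a b c, mul (a + b) c = mul a c + mul b c.
Proof. by move=> H a b c; rewrite -{1}[a]scale1r H scale1r. Qed.

Lemma mul0r_ (K : numFieldType) (V : lmodType K) (mul : V -> V -> V) :
  (forall (k : K) a b c, mul (k *: a + b) c = k *: mul a c + mul b c) ->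
  forall c, mul 0 c = 0.
Proof.
move=> H c; have := mul_addl H 0 0 c; rewrite addr0 => /eqP.
by rewrite -subr_eq subrr eq_sym => /eqP.
Qed.

Lemma mulr0_ (K : numFieldType) (V : lmodType K) (mul : V -> V -> V) :
  (forall (k : K) a b c, mul a (k *: b + c) = k *: mul a b + mul a c) ->
  forall c, mul c 0 = 0.
Proof.
move=> H c; have := mul_addr H c 0 0; rewrite addr0 => /eqP.
by rewrite -subr_eq subrr eq_sym => /eqP.
Qed.

Lemma phi_add (K : numFieldType) (V : lmodType K) (phi : V -> K) :
  (forall (k : K) a b, phi (k *: a + b) = k * phi a + phi b) ->
  forall a b, phi (a + b) = phi a + phi b.
Proof. by move=> H a b; rewrite -{1}[a]scale1r H mul1r. Qed.

Lemma phi0 (K : numFieldType) (V : lmodType K) (phi : V -> K) :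
  (forall (k : K) a b, phi (k *: a + b) = k * phi a + phi b) -> phi 0 = 0.
Proof.
move=> H; have := phi_add H 0 0; rewrite addr0 => /eqP.
by rewrite -subr_eq subrr eq_sym => /eqP.
Qed.

Lemma phiZ (K : numFieldType) (V : lmodType K) (phi : V -> K) :
  (forall (k : K) a b, phi (k *: a + b) = k * phi a + phi b) ->
  forall k a, phi (k *: a) = k * phi a.
Proof. by move=> H k a; rewrite -[k *: a]addr0 H (phi0 H) addr0. Qed.
Lemma small_pow (R : realType) (e : R[i]) : 0 < e -> exists N : nat, (2^-1 : R[i]) ^+ N < e.
Proof.
move=> e0.
have er : e \is Num.real by exact: gtr0_real.
have [r er'] := complex_realP _ er.
move: e0; rewrite er' ltcR => r0.
have : (GRing.exp (2^-1 : R) : R ^nat) @ \oo --> 0.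
  apply: cvg_expr. rewrite ger0_norm ?invr_ge0 // invf_lt1 // ltr1n //.
move/cvgrPdist_lt => /(_ r r0) [N _ HN].
exists N; have := HN N (leqnn N); rewrite /= sub0r normrN ger0_norm ?exprn_ge0 ?invr_ge0 // => h.

have -> : (2^-1 : R[i]) ^+ N = ((2^-1 : R) ^+ N)%:C%C.
  by rewrite rmorphXn /= rmorphV ?unitfE ?pnatr_eq0 // rmorph_nat.
by rewrite ltcR.
Qed.

Lemma mulrB_ (K : numFieldType) (V : lmodType K) (mul : V -> V -> V) :
  (forall (k : K) a b c, mul a (k *: b + c) = k *: mul a b + mul a c) ->
  forall a b c, mul a (b - c) = mul a b - mul a c.
Proof.
move=> H a b c; rewrite addrC -scaleN1r H scaleN1r addrC //.
Qed.

Lemma phi_bounded (R : realType) (A : completeNormedModType R[i]) (mul : A -> A -> A)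
    (phi : A -> R[i]) :
  normed_alg_mul (fun a : A => `|a|) mul -> character mul phi ->
  forall x, `|phi x| <= 2 * `|x|.
Proof.
move=> [Hl Hr Has Hn] [Hlin Hmul _] x.
rewrite real_leNgt ?realM ?normr_real //; apply/negP => hlt.
have px0 : phi x != 0.
  apply/negP => /eqP p0; move: hlt; rewrite p0 normr0.
  move=> h1; have := le_lt_trans (mulr_ge0 (ler0n _ 2) (normr_ge0 x)) h1; by rewrite ltxx.
pose h : R[i] := 2^-1.
have h0 : 0 <= h by rewrite /h invr_ge0.
set a := (phi x)^-1 *: x.
have pa : phi a = 1 by rewrite /a (phiZ Hlin) mulVf.
have na : `|a| <= h.
  rewrite /a normrZ normfV.
  have np : 0 < `|phi x| by rewrite normr_gt0.
  rewrite ler_pdivrMl // /h.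
  rewrite ler_pdivlMr // mulrC ltW //.
pose pw := fun n => iter n (mul a) a.
have npw n : `|pw n| <= h ^+ n.+1.
  elim: n => [|n IH] /=; first by rewrite expr1.
  rewrite exprS; apply: le_trans (Hn _ _) _; apply: ler_pM => //.
pose s := fun n => \sum_(k < n) pw k.
have srec n : s n.+1 = a + mul a (s n).
  rewrite /s big_ord_recl /=; congr (_ + _).
  by rewrite (big_morph (mul a) (mul_addr Hr a) (mulr0_ Hr a)).
have sdiff n j : `|s (n + j)%N - s n| <= h ^+ n - h ^+ (n + j).
  elim: j => [|j IH]; first by rewrite addn0 !subrr normr0.
  rewrite addnS /s big_ord_recr /= -/(s (n + j)%N) addrAC.
  apply: le_trans (ler_normD _ _) _.
  apply: le_trans (lerD IH (npw _)) _.
  rewrite le_eqVlt; apply/orP; left; apply/eqP.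
  rewrite !exprS -addrA; congr (_ + _).
  have h2 : h * 2 = 1 by rewrite /h mulVf ?pnatr_eq0.
  have e : h ^+ (n + j) = (h + h) * h ^+ (n + j).
    by rewrite -mulr2n -mulr_natr h2 mul1r.
  by rewrite {1}e mulrDl opprD addrNK.
have sle n m : (n <= m)%N -> `|s m - s n| <= h ^+ n.
  move=> nm; have := sdiff n (m - n)%N; rewrite subnKC // => H.
  apply: le_trans H _; rewrite lerBlDr lerDl exprn_ge0 //.
have cs : cauchy (s @ \oo).
  apply: cauchy_exP => e e0; rewrite /fmapE -ball_normE /ball_.
  have [N hN] := small_pow e0.
  exists (s N), N => // m nm /=.
  by rewrite distrC; apply: le_lt_trans (sle _ _ nm) hN.
have cv : cvg (s @ \oo) by exact: cauchy_cvg.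
set b := lim (s @ \oo).
have Hs : s @ \oo --> b by exact: cv.
have H1 : (fun n => s n.+1) @ \oo --> b.
  by move: Hs; rewrite -cvg_shiftS.
have H2 : (fun n => s n.+1) @ \oo --> a + mul a b.
  apply/cvgrPdist_lt => e e0.
  move/cvgrPdist_lt: Hs => /(_ e e0); apply: filterS => n hn.
  rewrite srec opprD addrACA subrr add0r -(mulrB_ Hr).
  apply: le_lt_trans (Hn _ _) _.
  apply: le_lt_trans hn; rewrite -[X in _ <= X]mul1r ler_wpM2r //.
  apply: le_trans na _; rewrite /h invf_le1 // ler1n //.
have eb : b = a + mul a b by exact: (cvg_unique _ H1 H2).
have := congr1 phi eb; rewrite (phi_add Hlin) Hmul pa mul1r.
move/(congr1 (fun t => t - phi b)); rewrite subrr addrK => /eqP.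
by rewrite eq_sym oner_eq0.
Qed.

Lemma sum11 (R : realType) (A : completeNormedModType R[i]) n (F : 'I_n -> (A * A) * A) :
  (\sum_(k < n) F k).1.1 = \sum_(k < n) (F k).1.1.
Proof.
by rewrite (big_morph (fun x : (A*A)*A => x.1.1) (id1 := 0) (op1 := +%R)).
Qed.

Lemma phi_sum (K : numFieldType) (V : lmodType K) (phi : V -> K) :
  (forall (k : K) a b, phi (k *: a + b) = k * phi a + phi b) ->
  forall n (F : 'I_n -> V), phi (\sum_(k < n) F k) = \sum_(k < n) phi (F k).
Proof.
move=> H n F; by rewrite (big_morph phi (phi_add H) (phi0 H)).
Qed.

Lemma phiB (K : numFieldType) (V : lmodType K) (phi : V -> K) :
  (forall (k : K) a b, phi (k *: a + b) = k * phi a + phi b) ->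
  forall a b, phi (a - b) = phi a - phi b.
Proof.
by move=> H a b; rewrite addrC -scaleN1r H mulN1r addrC.
Qed.

Lemma tn11 (R : realType) (A : completeNormedModType R[i]) (s : (A * A) * A) :
  `|s.1.1| <= tri_norm s.
Proof. by rewrite /tri_norm -addrA lerDl addr_ge0. Qed.

Lemma tn12 (R : realType) (A : completeNormedModType R[i]) (s : (A * A) * A) :
  `|s.1.2| <= tri_norm s.
Proof. by rewrite /tri_norm addrAC lerDr addr_ge0. Qed.

Lemma tri_mul_assoc (K : numFieldType) (A : normedModType K) (mul : A -> A -> A) :
  normed_alg_mul (fun a : A => `|a|) mul ->
  forall s t r, tri_mul mul (tri_mul mul s t) r = tri_mul mul s (tri_mul mul t r).
Proof.
move=> [Hl Hr Has _] [[s1 s2] s3] [[t1 t2] t3] [[r1 r2] r3]; rewrite /tri_mul /=.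
rewrite !Has (mul_addl Hl) (mul_addr Hr) !Has addrA //.
Qed.

Lemma ev_comb (K : numFieldType) (a b : nat -> K) :
  (forall e, 0 < e -> exists N, forall n, (N <= n)%N -> `|a n| < e) ->
  (forall e, 0 < e -> exists N, forall n, (N <= n)%N -> `|a n - b n| < e) ->
  forall e, 0 < e -> exists N, forall n, (N <= n)%N -> `|b n| < e + e.
Proof.
move=> Ha Hab e e0; have [N1 H1] := Ha e e0; have [N2 H2] := Hab e e0.
exists (maxn N1 N2) => n; rewrite geq_max => /andP[n1 n2].
have -> : b n = a n - (a n - b n) by rewrite opprB addrC subrK.
apply: le_lt_trans (ler_normB _ _) _; apply: ltrD; [exact: H1|exact: H2].
Qed.

Theorem mainTheorem7 (R : realType) (A : completeNormedModType R[i])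
    (mul : A -> A -> A) (phi : A -> R[i]) :
  normed_alg_mul (fun a : A => `|a|) mul ->
  left_approx_identity (fun a : A => `|a|) mul ->
  character mul phi ->
  ~ approx_biprojective (tri_norm (A:=A)) (tri_mul mul).
Proof.
move=> Halg _ Hch [I [le [rho [Hdir Hrho Hconv]]]].
have Hb := phi_bounded Halg Hch.
case: Hch => Hlin Hmul [a0 pa0].
have Halg' := Halg; case: Halg' => Hl Hr Has Hn.
pose h : R[i] := 2^-1.
have h0 : 0 < h by rewrite /h invr_gt0.
have h2 : 2 * h = 1 by rewrite /h mulfV ?pnatr_eq0.
have hh : h + h = 1 by rewrite -h2 mulr_natl mulr2n.
pose c := (phi a0)^-1 *: a0.
have pc : phi c = 1 by rewrite /c (phiZ Hlin) mulVf.
pose u : (A * A) * A := ((c, 0), 0).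
pose v : (A * A) * A := ((0, a0), 0).
pose d : (A * A) * A := ((0, 0), a0).
pose B := tri_mul mul v d.
pose q := phi a0 * phi a0.
have q0 : 0 < `|q| by rewrite normr_gt0 mulf_neq0.
have assoc := tri_mul_assoc Halg u v d.
have [i0 Hi0] := Hconv u (h * h) (mulr_gt0 h0 h0).
have lei : le i0 i0 by case: Hdir.
have [p [Hpi Hp]] := Hi0 i0 lei.
have [_ _ HL HR _] := Hrho i0.
pose f := fun s t : (A * A) * A => phi s.1.1 * phi t.1.2.
have fbb : bounded_bilinear (tri_norm (A:=A)) f.
  split.
  - by move=> k a b c'; rewrite /f /= Hlin mulrDl mulrA.
  - by move=> k a b c'; rewrite /f /= Hlin mulrDr mulrCA.
  - exists (2 * 2) => a b; rewrite /f normrM.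
    apply: le_trans (ler_pM (normr_ge0 _) (normr_ge0 _) (Hb a.1.1) (Hb b.1.2)) _.
    rewrite mulrACA -[leRHS]mulrA ler_wpM2l ?mulr_ge0 //.
    by apply: ler_pM => //; [exact: tn11 | exact: tn12].
have fact1 s t : f (tri_mul mul (tri_mul mul u v) s) t = 0.
  by rewrite /f /u /v /tri_mul /= !Hmul (phi0 Hlin) mulr0 !mul0r.
have fact2 s t : f s (tri_mul mul t B) = phi s.1.1 * phi t.1.1 * q.
  rewrite /f /B /v /d /tri_mul /= !(phi_add Hlin) !Hmul (phi0 Hlin).
  by rewrite !(phi_add Hlin) !Hmul (phi0 Hlin) !mul0r add0r mulr0 addr0 /q !mulrA.
pose w := rho i0 u.
pose z := rho i0 (tri_mul mul u B).
pose a := fun N => \sum_(k < N) f (z k).1 (z k).2.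
pose S := fun N => \sum_(k < N) phi (w k).1.1.1 * phi (w k).2.1.1.
have Ha : forall e, 0 < e -> exists N, forall n, (N <= n)%N -> `|a n| < e.
  move=> e e0; have [N HN] := HL (tri_mul mul u v) d f fbb e e0.
  exists N => n nN; apply: le_lt_trans (HN n nN).
  rewrite subr0 le_eqVlt; apply/orP; left; apply/eqP; congr `|_|.
  by apply: eq_bigr => k _; rewrite fact1 subr0 assoc.
have Hab : forall e, 0 < e -> exists N, forall n, (N <= n)%N -> `|a n - S n * q| < e.
  move=> e e0; have [N HN] := HR u B f fbb e e0.
  exists N => n nN; apply: le_lt_trans (HN n nN).
  rewrite subr0 le_eqVlt; apply/orP; left; apply/eqP; congr `|_|.
  rewrite /a /S mulr_suml -sumrB.
  by apply: eq_bigr => k _; rewrite fact2.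
have hq0 : 0 < h * h * h * `|q| by rewrite !mulr_gt0.
have [N1 H1] := ev_comb Ha Hab hq0.
have [N2 H2] := Hpi (h * h * h) (mulr_gt0 (mulr_gt0 h0 h0) h0).
pose n := maxn N1 N2.
have {}H1 := H1 n (leq_maxl _ _).
have {}H2 := H2 n (leq_maxr _ _).
have F1 : `|S n| < h * h.
  rewrite -(ltr_pM2r q0) -normrM; apply: lt_le_trans H1 _.
  by rewrite -mulrDl -mulrDr hh mulr1.
have SE : S n = phi (\sum_(k < n) tri_mul mul (w k).1 (w k).2).1.1.
  rewrite sum11 (phi_sum Hlin); apply: eq_bigr => k _.
  by rewrite /tri_mul /= Hmul.
have e2 : h * h = 2 * (h * h * h).
  by rewrite (mulrC (h * h)) mulrA h2 mul1r.
have F2 : `|S n - phi p.1.1| < h * h.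
  rewrite SE -(phiB Hlin).
  set P := \sum_(k < n) _.
  have -> : P.1.1 - p.1.1 = (P - p).1.1 by [].
  apply: le_lt_trans (Hb _) _.
  apply: le_lt_trans (ler_wpM2l _ (tn11 (P - p))) _ => //.
  by rewrite e2 ltr_pM2l.
have F3 : `|phi p.1.1 - 1| < h.
  rewrite -pc -(phiB Hlin).
  have -> : p.1.1 - c = (p - u).1.1 by [].
  apply: le_lt_trans (Hb _) _.
  apply: le_lt_trans (ler_wpM2l _ (tn11 (p - u))) _ => //.
  have e1 : h = 2 * (h * h) by rewrite mulrA h2 mul1r.
  by rewrite [X in _ < X]e1 ltr_pM2l.
have : `|1 : R[i]| < 1.
  have E : (1 : R[i]) = (1 - phi p.1.1) + (phi p.1.1 - S n) + S n.
    by rewrite -addrA subrK subrK.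
  rewrite {1}E.
  apply: le_lt_trans (ler_normD _ _) _.
  have Hsum : h + h * h + h * h = 1 by rewrite -addrA -mulrDr hh mulr1 hh.
  rewrite -[X in _ < X]Hsum.
  apply: ltrD => //; apply: le_lt_trans (ler_normD _ _) _.
  apply: ltrD; first by rewrite distrC.
  by rewrite distrC.
by rewrite normr1 ltxx.
Qed.
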